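(* Let $\mathscr P$ be a finite collection of finite posets. If $\sum_{P\in\mathscr P}K_P(\mathbf x)$ is a symmetric function, then it is $p$-positive, i.e. it is a linear combination of power sum symmetric functions $p_\lambda$ with nonnegative coefficients.
   Context: For a finite poset $P$, $K_P(\mathbf x)=\sum_f\prod_{x\in P}x_{f(x)}$, summed over all maps $f:P\to\mathbb Z_{>0}$ with $x<_Py\Rightarrow f(x)\le f(y)$; this is a quasisymmetric function in $\mathbf x=(x_1,x_2,\dots)$. $p_\lambda$ denotes the power sum symmetric function. *)

(* Defs.v *)
From HB Require Import structures.
From mathcomp Require Import all_boot all_order all_algebra.
Set Implicit Arguments. Unset Strict Implicit. Unset Printing Implicit Defensive.
Import Order.TTheory GRing.Theory Num.Theory.

(* Monomials in x_1, x_2, ... are encoded by exponent sequences a : seq nat,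
   where nth 0 a i is the exponent of x_(i+1); trailing zeros are allowed
   (a and a ++ [:: 0] encode the same monomial, and all coefficients below
   agree on them).  A formal power series is given by its coefficient
   function seq nat -> nat (or rat). *)

(* Coefficient of x^a in K_P: number of maps f : P -> {1,..,size a}
   (encoded as 'I_(size a), value i standing for i+1) with
   x <_P y => f x <= f y, and |f^-1(i+1)| = a_i for every i. *)
Definition Kcoef (d : Order.disp_t) (P : finPOrderType d) (a : seq nat) : nat :=
  #|[set f : {ffun P -> 'I_(size a)} |
      [forall x : P, forall y : P, (x < y)%O ==> (f x <= f y)%N] &&
      [forall i : 'I_(size a), #|[set x : P | f x == i]| == nth 0 a i]]|.

(* Coefficient of x^a in p_l = prod_j (sum_i x_i^(l_j)): number of ways to
   choose a variable index for each part so that the exponents add to a. *)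
Definition Pcoef (l a : seq nat) : nat :=
  #|[set g : {ffun 'I_(size l) -> 'I_(size a)} |
      [forall i : 'I_(size a), (\sum_(j < size l | g j == i) nth 0 l j) == nth 0 a i]]|.

Definition is_partition (l : seq nat) : bool := sorted geq l && all (leq 1) l.

(* Main.v *)
Require Import Defs.
From HB Require Import structures.
From mathcomp Require Import all_boot all_order all_algebra zify ring lra.
Set Implicit Arguments. Unset Strict Implicit. Unset Printing Implicit Defensive.
Import Order.TTheory GRing.Theory Num.Theory.
Local Open Scope ring_scope.

Fixpoint SgF (f m : nat) (psi : seq nat -> rat) (b : seq nat) : rat :=
  match f with
  | 0 => psi b
  | f'.+1 => if m is 0 then psi b
             else - \sum_(j < m) SgF f' (m - j.+1) (fun b' => psi (j.+1 :: b')) b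
  end.

Lemma SgF_ext f m psi psi' : psi =1 psi' -> SgF f m psi =1 SgF f m psi'.
Proof.
elim: f m psi psi' => [|f IH] m psi psi' e b /=; first exact: e.
case: m => [|m]; first exact: e.
congr (- _); apply: eq_bigr => j _; apply: IH => b'; exact: e.
Qed.

Lemma SgF_fuel f g m psi b : (m <= f)%N -> (m <= g)%N -> SgF f m psi b = SgF g m psi b.
Proof.
elim: f g m psi b => [|f IH] g m psi b.
  by rewrite leqn0 => /eqP -> _; case: g.
case: m => [|m] hf hg; first by case: g hg.
case: g hg => [//|g] hg /=.
congr (- _); apply: eq_bigr => j _; apply: IH.
  by move: hf; clear; lia.
by move: hg; clear; lia.
Qed.

Definition Sg m := SgF m m.

Lemma Sg0 psi b : Sg 0 psi b = psi b. Proof. by []. Qed.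

Lemma SgS m psi b : (0 < m)%N ->
  Sg m psi b = - \sum_(j < m) Sg (m - j.+1) (fun b' => psi (j.+1 :: b')) b.
Proof.
case: m => [//|m] _; rewrite /Sg /=; congr (- _); apply: eq_bigr => j _.
by apply: SgF_fuel => //; lia.
Qed.

Lemma Sg_ext m psi psi' : psi =1 psi' -> Sg m psi =1 Sg m psi'.
Proof. exact: SgF_ext. Qed.

Lemma SgF_sum (I : Type) (r : seq I) (P : pred I) (F : I -> seq nat -> rat) f m b :
  SgF f m (fun b => \sum_(i <- r | P i) F i b) b = \sum_(i <- r | P i) SgF f m (F i) b.
Proof.
elim: f m F b => [|f IH] m F b //=.
case: m => [//|m].
transitivity (- \sum_(j < m.+1) \sum_(i <- r | P i) SgF f (m.+1 - j.+1) (fun b' => F i (j.+1 :: b')) b).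
  congr (- _); apply: eq_bigr => j _; exact: (IH _ (fun i b' => F i (j.+1 :: b'))).
rewrite exchange_big /= -sumrN; apply: eq_bigr => i _; by [].
Qed.

Lemma Sg_sum (I : Type) (r : seq I) (P : pred I) (F : I -> seq nat -> rat) m b :
  Sg m (fun b => \sum_(i <- r | P i) F i b) b = \sum_(i <- r | P i) Sg m (F i) b.
Proof. exact: SgF_sum. Qed.

Lemma SgF_scale k psi f m b : SgF f m (fun b => k * psi b) b = k * SgF f m psi b.
Proof.
elim: f m psi b => [|f IH] m psi b //=.
case: m => [//|m].
rewrite mulrN mulr_sumr; congr (- _); apply: eq_bigr => j _; exact: IH.
Qed.

Lemma Sg_scale k psi m b : Sg m (fun b => k * psi b) b = k * Sg m psi b.
Proof. exact: SgF_scale. Qed.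

Definition Blk (a : nat) (psi : seq nat -> rat) (b : seq nat) : rat :=
  \sum_(j < a) (j.+1)%:R * Sg (a - j.+1) (fun b' => psi (j.+1 :: b')) b.

Lemma Blk_ext a psi psi' : psi =1 psi' -> Blk a psi =1 Blk a psi'.
Proof.
move=> e b; apply: eq_bigr => j _; congr (_ * _); apply: Sg_ext => b'; exact: e.
Qed.

Lemma Blk_sum (I : Type) (r : seq I) (P : pred I) (F : I -> seq nat -> rat) a b :
  Blk a (fun b => \sum_(i <- r | P i) F i b) b = \sum_(i <- r | P i) Blk a (F i) b.
Proof.
rewrite /Blk; under eq_bigr => j _ do rewrite Sg_sum mulr_sumr.
by rewrite exchange_big.
Qed.

Lemma Blk_scale k psi a b : Blk a (fun b => k * psi b) b = k * Blk a psi b.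
Proof.
rewrite /Blk mulr_sumr; apply: eq_bigr => j _; by rewrite Sg_scale mulrCA.
Qed.

Fixpoint Nf (al : seq nat) (psi : seq nat -> rat) : rat :=
  match al with [::] => psi [::] | a :: al' => Nf al' (Blk a psi) end.

Lemma Nf_ext al psi psi' : psi =1 psi' -> Nf al psi = Nf al psi'.
Proof.
elim: al psi psi' => [|a al IH] psi psi' e /=; first exact: e.
apply: IH; exact: Blk_ext.
Qed.

Lemma Nf_sum (I : Type) (r : seq I) (P : pred I) (F : I -> seq nat -> rat) al :
  Nf al (fun b => \sum_(i <- r | P i) F i b) = \sum_(i <- r | P i) Nf al (F i).
Proof.
elim: al F => [|a al IH] F //=.
rewrite -IH; apply: Nf_ext => b; exact: Blk_sum.
Qed.

Lemma Nf_scale k psi al : Nf al (fun b => k * psi b) = k * Nf al psi.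
Proof.
elim: al psi => [|a al IH] psi //=.
rewrite -IH; apply: Nf_ext => b; exact: Blk_scale.
Qed.

Definition Zv (s t : nat) (psi : seq nat -> rat) :=
  forall beta, all (leq 1) beta -> sumn beta = s -> (t <= size beta)%N -> psi beta = 0.

Lemma Zv_cons j s t psi : (0 < j <= s)%N -> Zv s t psi ->
  Zv (s - j) t.-1 (fun b => psi (j :: b)).
Proof.
move=> /andP[j0 js] Z beta pb sb tb; apply: Z => /=.
- by rewrite pb andbT.
- by rewrite sb; move: js; lia.
- by move: tb; lia.
Qed.

Lemma SgZ m s s' t psi : Zv s t psi -> s = (m + s')%N -> Zv s' t (Sg m psi).
Proof.
elim/ltn_ind: m s s' t psi => m IH s s' t psi Z es beta pb sb tb.
case: m IH es => [|m] IH es; first by rewrite Sg0; apply: Z => //; rewrite es sb.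
rewrite SgS // big1 ?oppr0 // => j _.
have jm := ltn_ord j.
apply: (IH (m.+1 - j.+1)%N _ (s - j.+1)%N s' t.-1) => //.
- by rewrite subSS ltnS leq_subr.
- by apply: Zv_cons => //; rewrite es; move: jm; lia.
- by rewrite es; move: jm; lia.
- by move: tb; lia.
Qed.

Lemma SgZ1 m s s' t psi : (0 < m)%N -> Zv s t psi -> s = (m + s')%N ->
  Zv s' t.-1 (Sg m psi).
Proof.
move=> m0 Z es beta pb sb tb.
rewrite SgS // big1 ?oppr0 // => j _.
have jm := ltn_ord j.
apply: (SgZ (s := (s - j.+1)%N) (t := t.-1)) => //.
- by apply: Zv_cons => //; rewrite es; move: jm; lia.
- by rewrite es; move: jm; lia.
Qed.

Lemma BlkZ a s s' t psi : Zv s t psi -> s = (a + s')%N -> Zv s' t.-1 (Blk a psi).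
Proof.
move=> Z es beta pb sb tb; rewrite /Blk big1 // => j _.
have jm := ltn_ord j.
rewrite (SgZ (s := (s - j.+1)%N) (t := t.-1) (s' := s')) ?mulr0 //.
- by apply: Zv_cons => //; rewrite es; move: jm; lia.
- by rewrite es; move: jm; lia.
Qed.

Lemma Nf_tri0 al psi : Zv (sumn al) (size al) psi -> Nf al psi = 0.
Proof.
elim: al psi => [|a al IH] psi Z /=; first by apply: Z.
apply: IH; exact: (BlkZ (s := sumn (a :: al)) (t := size (a :: al))).
Qed.

Lemma Nf_tri1 al psi : all (leq 1) al -> Zv (sumn al) (size al).+1 psi ->
  Nf al psi = (\prod_(x <- al) x%:R) * psi al.
Proof.
elim: al psi => [|a al IH] psi pal Z /=; first by rewrite big_nil mul1r.
case/andP: pal => a0 pal.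
rewrite (IH _ pal); last exact: (BlkZ (s := sumn (a :: al)) (t := (size (a :: al)).+1)).
rewrite big_cons -mulrA mulrCA; congr (_ * _).
case: a a0 Z => [//|a] _ Z.
rewrite /Blk big_ord_recr /= big1 ?add0r.
  by rewrite subnn Sg0 mulrC.
move=> j _; have jm := ltn_ord j.
rewrite (SgZ1 (s := (sumn (a.+1 :: al) - j.+1)%N) (t := (size al).+1) (s' := sumn al)) ?mulr0 //.
- by rewrite subSS subn_gt0.
- have := Zv_cons (j := j.+1) _ Z; apply => /=; move: jm; lia.
- by rewrite /=; move: jm; lia.
Qed.

Section Gen.
Variable T : finType.
Variable lt : rel T.

Definition filt (A U : {set T}) : bool :=
  (U \subset A) && [forall x in U, forall y in A, lt x y ==> (y \in U)].

Lemma filtP (A U : {set T}) : reflect ({subset U <= A} /\ forall x y, x \in U -> y \in A -> lt x y -> y \in U) (filt A U).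
Proof.
apply: (iffP andP) => [[/subsetP sUA /forall_inP H]|[sUA H]]; split => //.
- move=> x y xU yA lxy. by move: (H x xU) => /forall_inP /(_ y yA) /implyP; apply.
- by apply/subsetP.
- apply/forall_inP => x xU; apply/forall_inP => y yA; apply/implyP; exact: H.
Qed.

Lemma filt_refl (A : {set T}) : filt A A.
Proof. by apply/filtP; split=> // x y _ ->. Qed.

Lemma filt_trans (A V U : {set T}) : filt A V -> filt V U -> filt A U.
Proof.
move=> /filtP[sVA hV] /filtP[sUV hU]; apply/filtP; split.
  by move=> x /sUV /sVA.
move=> x y xU yA lxy; apply: (hU x y xU) => //; exact: (hV x y (sUV x xU)).
Qed.

Lemma pair_big (R : nmodType) (A : {set T}) (Q : pred {set T})
   (F : {set T} -> {set T} -> R) :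
  \sum_(V | filt A V && Q V) \sum_(U | filt V U) F V U =
  \sum_(U | filt A U) \sum_(V | filt (A :\: U) V && Q (V :|: U)) F (V :|: U) U.
Proof.
rewrite (exchange_big_dep (filt A)) /=; last first.
  by move=> V U /andP[fAV _] fVU; exact: filt_trans fAV fVU.
apply: eq_bigr => U fAU.
rewrite (reindex_onto (fun V => V :|: U) (fun V => V :\: U)) /=; last first.
  move=> V /andP[_ /filtP[sUV _]]; apply/setP => x; rewrite !inE.
  by case: (boolP (x \in U)) => [/sUV -> | _]; rewrite ?orbT ?orbF.
apply: eq_bigl => V.
have [sUA hAU] := filtP _ _ fAU.
apply/idP/idP.
- move=> /andP[/andP[/andP[/filtP[sVUA hVU] qV] _] /eqP eV].
  rewrite qV andbT; apply/filtP; split.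
    move=> x xV; rewrite inE; apply/andP; split.
      by rewrite -eV inE in xV; case/andP: xV.
    by apply: sVUA; rewrite inE xV.
  move=> x y xV; rewrite inE => /andP[yU yA] lxy.
  have := hVU x y; rewrite !inE xV orTb => /(_ isT yA lxy).
  by rewrite (negbTE yU) orbF.
- move=> /andP[/filtP[sV hV] qV]; rewrite qV andbT.
  have dV : [disjoint V & U].
    apply/pred0P => x /=; apply/negP => /andP[xV xU].
    by move: (sV x xV); rewrite inE xU.
  apply/andP; split; last first.
    apply/eqP/setP => x; rewrite !inE.
    case: (boolP (x \in U)) => xU; case: (boolP (x \in V)) => xV //=.
    by move: (sV x xV); rewrite inE xU.
  apply/andP; split.
  + apply/filtP; split.
      move=> x; rewrite inE => /orP[/sV|/sUA //]; by rewrite inE => /andP[].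
    move=> x y; rewrite !inE => /orP[xV|xU] yA lxy.
      case: (boolP (y \in U)) => yU; first by rewrite orbT.
      by rewrite (hV x y xV) // inE yU yA.
    by rewrite (hAU x y xU yA lxy) orbT.
  + apply/filtP; split; first by move=> x xU; rewrite inE xU orbT.
    move=> x y xU yVU lxy; apply: (hAU x y xU) => //.
    by move: yVU; rewrite inE => /orP[/sV|/sUA //]; rewrite inE => /andP[].
Qed.

Variable wt : T -> nat.
Definition wsum (A : {set T}) : nat := (\sum_(x in A) wt x)%N.

Fixpoint KS (a : seq nat) (A : {set T}) : nat :=
  match a with
  | [::] => (A == set0 : nat)
  | k :: a' => (\sum_(U | filt A U && (wsum (A :\: U) == k)) KS a' U)%N
  end.

Definition KSr (A : {set T}) : seq nat -> rat := fun b => (KS b A)%:R.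

Lemma KSr_nil (A : {set T}) : KSr A [::] = (A == set0)%:R.
Proof. by []. Qed.

Lemma KSr_cons A k b :
  KSr A (k :: b) = \sum_(U | filt A U && (wsum (A :\: U) == k)) KSr U b.
Proof. by rewrite /KSr /= natr_sum. Qed.

Lemma SgKS_cons m j A b :
  (forall V b, Sg m (KSr V) b =
     \sum_(U | filt V U) Sg m (KSr (V :\: U)) [::] * KSr U b) ->
  Sg m (fun b' => KSr A (j :: b')) b =
  \sum_(U | filt A U) Sg m (fun b' => KSr (A :\: U) (j :: b')) [::] * KSr U b.
Proof.
move=> IH.
rewrite (Sg_ext _ (fun b' => KSr_cons A j b')) Sg_sum.
under eq_bigr => V _ do rewrite IH.
rewrite (pair_big A (fun V => wsum (A :\: V) == j)
   (fun V U => Sg m (KSr (V :\: U)) [::] * KSr U b)).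
apply: eq_bigr => U fAU.
rewrite (Sg_ext _ (fun b' => KSr_cons (A :\: U) j b')) Sg_sum mulr_suml.
apply: eq_big => V.
  by rewrite setDDl setUC.
move=> /andP[/filtP[sV _] _]; congr (Sg m (KSr _) [::] * _).
apply/setP => x; rewrite !inE.
case: (boolP (x \in V)) => xV /=; last by case: (x \in U); rewrite ?andbF.
by move: (sV x xV); rewrite inE => /andP[->].
Qed.

Lemma SgKS m V b :
  Sg m (KSr V) b = \sum_(U | filt V U) Sg m (KSr (V :\: U)) [::] * KSr U b.
Proof.
elim/ltn_ind: m V b => m IH V b.
case: m IH => [|m] IH.
  rewrite Sg0 (bigD1 V) ?filt_refl //= big1 ?addr0.
    by rewrite Sg0 setDv /KSr /= eqxx mul1r.
  move=> U /andP[/filtP[sU _] nUV]; rewrite Sg0 /KSr /=.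
  suff -> : (V :\: U == set0) = false by rewrite mul0r.
  apply/negP => /eqP e; move/negP: nUV; apply; apply/eqP/setP => x.
  apply/idP/idP => [/sU //|xV]; apply/negPn/negP => xU.
  by move: (in_set0 x); rewrite -e inE xU xV.
rewrite SgS //.
have hj : forall j : 'I_m.+1, (m.+1 - j.+1 < m.+1)%N.
  by move=> j; rewrite subSS ltnS leq_subr.
under eq_bigr => j _ do rewrite (SgKS_cons _ _ _ (IH _ (hj j))).
under [RHS]eq_bigr => U _ do rewrite SgS // mulNr mulr_suml.
by rewrite sumrN exchange_big.
Qed.

Lemma Blk_KS a A b :
  Blk a (KSr A) b = \sum_(U | filt A U) Blk a (KSr (A :\: U)) [::] * KSr U b.
Proof.
rewrite /Blk; under eq_bigr => j _ do rewrite (SgKS_cons _ _ _ (@SgKS _)) mulr_sumr.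
rewrite exchange_big; apply: eq_bigr => U _; rewrite mulr_suml.
by apply: eq_bigr => j _; rewrite mulrA.
Qed.

Lemma Nf_KS a al A :
  Nf (a :: al) (KSr A) = \sum_(U | filt A U) Blk a (KSr (A :\: U)) [::] * Nf al (KSr U).
Proof.
rewrite /= (Nf_ext _ (Blk_KS a A)).
rewrite (Nf_sum _ _ (fun U b => Blk a (KSr (A :\: U)) [::] * KSr U b)).
by apply: eq_bigr => U _; rewrite Nf_scale.
Qed.

Lemma sum_pick (I : finType) M (P : pred I) (g : I -> nat) (F : nat -> I -> rat) :
  \sum_(j < M) \sum_(i | P i && (g i == j.+1)) F j.+1 i =
  \sum_(i | P i && (0 < g i <= M)%N) F (g i) i.
Proof.
under eq_bigr => j _ do rewrite big_mkcondr.
rewrite exchange_big [RHS]big_mkcondr; apply: eq_bigr => i _.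
case: ifP => hg.
  have hM : ((g i).-1 < M)%N by case/andP: hg; case: (g i) => //.
  rewrite (bigD1 (Ordinal hM)) //= big1.
    by rewrite (prednK (proj1 (andP hg))) eqxx addr0.
  move=> j nj; case: eqP => // e; case/eqP: nj; apply: val_inj => /=.
  by rewrite e.
apply: big1 => j _; case: eqP => // e; move: hg; rewrite e ltn_ord.
by [].
Qed.

Hypothesis hw : forall x, (0 < wt x)%N.

Lemma wsumD (A U : {set T}) : {subset U <= A} -> wsum A = (wsum U + wsum (A :\: U))%N.
Proof.
move=> /subsetP sUA; rewrite /wsum (big_setID U) /=; congr (_ + _)%N.
by rewrite (setIidPr sUA).
Qed.

Lemma wsum0 (A : {set T}) : wsum A = 0%N -> A = set0.
Proof.
move=> e; apply/setP => x; rewrite inE; apply/negP => xA.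
by move: e; rewrite /wsum (bigD1 x) //=; move: (hw x); case: (wt x).
Qed.

Lemma wsum_set0 : wsum set0 = 0%N.
Proof. by rewrite /wsum big_set0. Qed.

Lemma Sg_supp m V : m != wsum V -> Sg m (KSr V) [::] = 0.
Proof.
elim/ltn_ind: m V => m IH V.
case: m IH => [|m] IH hm.
  rewrite Sg0 /KSr /=; case: eqP => [e|]; last by [].
  by move: hm; rewrite e wsum_set0.
rewrite SgS // big1 ?oppr0 // => j _.
rewrite (Sg_ext _ (fun b' => KSr_cons V j.+1 b')) Sg_sum big1 // => W /andP[fW /eqP hW].
apply: IH; first by rewrite subSS ltnS leq_subr.
have [sW _] := filtP _ _ fW.
move: hm; rewrite (wsumD sW) hW; apply: contra => /eqP e.
have := ltn_ord j; move: e; clear; lia.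
Qed.

Definition mu (V : {set T}) := Sg (wsum V) (KSr V) [::].

Lemma filt_set0 (W : {set T}) : filt set0 W = (W == set0).
Proof.
apply/idP/idP => [/filtP[sW _]|/eqP ->]; last exact: filt_refl.
by apply/eqP/setP => x; rewrite inE; apply/negP => /sW; rewrite inE.
Qed.

Lemma filt_eqV (V W : {set T}) : filt V W -> (0 < wsum (V :\: W))%N = (W != V).
Proof.
move=> /filtP[sW _]; apply/idP/idP.
  apply: contraTneq => ->; by rewrite setDv wsum_set0.
move=> nWV; rewrite lt0n; apply: contra nWV => /eqP /wsum0 e.
apply/eqP/setP => x; apply/idP/idP => [/sW //|xV].
by apply/negPn/negP => xW; move: (in_set0 x); rewrite -e inE xW xV.
Qed.

Lemma mu_sum (V : {set T}) : \sum_(W | filt V W) mu W = (V == set0)%:R.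
Proof.
case: (eqVneq V set0) => [->|nV].
  rewrite (bigD1 set0) ?filt_refl //= big1 ?addr0.
    by rewrite /mu wsum_set0 Sg0 /KSr /= eqxx.
  by move=> W; rewrite filt_set0 andbN.
rewrite (bigD1 V) ?filt_refl //=.
have hV : (0 < wsum V)%N.
  by rewrite lt0n; apply: contra nV => /eqP /wsum0 ->.
suff -> : mu V = - \sum_(W | filt V W && (W != V)) mu W.
  by rewrite addNr; case: eqP nV.
rewrite {1}/mu SgS //; congr (- _).
under eq_bigr => j _ do rewrite (Sg_ext _ (fun b' => KSr_cons V j.+1 b')) Sg_sum.
rewrite (sum_pick (wsum V) (filt V) (fun W => wsum (V :\: W))
          (fun k W => Sg (wsum V - k) (KSr W) [::])).
apply: eq_big => W.
  case fW: (filt V W) => //=; rewrite (filt_eqV fW).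
  have [sW _] := filtP _ _ fW; by rewrite (wsumD sW) leq_addl andbT.
move=> /andP[fW _]; have [sW _] := filtP _ _ fW.
by rewrite /mu (wsumD sW) addnK.
Qed.

Hypothesis ltT : transitive lt.

Definition Kx (D : {set T}) (x : T) := [set y in D | ~~ ((y == x) || lt y x)].

Lemma filt_Kx (D V : {set T}) x : x \in D ->
  (filt D V && (x \notin V)) = filt (Kx D x) V.
Proof.
move=> xD; apply/idP/idP.
  move=> /andP[/filtP[sV hV] xV]; apply/filtP; split.
    move=> y yV; rewrite inE (sV y yV) /=; apply/negP => /orP[/eqP e|lyx].
      by move: xV; rewrite -e yV.
    by move: xV; rewrite (hV y x yV xD lyx).
  by move=> y z yV; rewrite inE => /andP[zD _]; apply: hV.
move=> /filtP[sV hV]; apply/andP; split.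
  apply/filtP; split; first by move=> y /sV; rewrite inE => /andP[].
  move=> y z yV zD lyz; apply: (hV y z yV) => //.
  rewrite inE zD /=; apply/negP => /orP[/eqP e|lzx].
    by move: (sV y yV); rewrite inE -e lyz orbT andbF.
  by move: (sV y yV); rewrite inE (ltT lyz lzx) orbT andbF.
by apply/negP => /sV; rewrite inE eqxx andbF.
Qed.

Lemma n_val a (D : {set T}) :
  Blk a (KSr D) [::] =
  (a == wsum D)%:R * \sum_(x in D) (wt x)%:R * (Kx D x == set0)%:R.
Proof.
rewrite /Blk.
under eq_bigr => j _ do rewrite (Sg_ext _ (fun b' => KSr_cons D j.+1 b')) Sg_sum mulr_sumr.
rewrite (sum_pick a (filt D) (fun V => wsum (D :\: V))
          (fun k V => k%:R * Sg (a - k) (KSr V) [::])).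
case: (eqVneq a (wsum D)) => [ea|na]; last first.
  rewrite mul0r big1 // => V /andP[fV /andP[_ hle]].
  rewrite Sg_supp ?mulr0 //; apply: contra na => /eqP e.
  have [sV _] := filtP _ _ fV; rewrite (wsumD sV); move: e hle; clear; lia.
rewrite mul1r.
transitivity (\sum_(V | filt D V) (wsum (D :\: V))%:R * mu V).
  rewrite big_mkcondr; apply: eq_bigr => V fV.
  have [sV _] := filtP _ _ fV.
  have hle : (wsum (D :\: V) <= a)%N by rewrite ea (wsumD sV) leq_addl.
  rewrite hle andbT; case: ifP => [_|]; first by rewrite /mu ea (wsumD sV) addnK.
  by move/negbT; rewrite lt0n negbK => /eqP ->; rewrite mul0r.
transitivity (\sum_(V | filt D V) \sum_(x in D | x \notin V) (wt x)%:R * mu V).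
  apply: eq_bigr => V _; rewrite -mulr_suml -natr_sum; congr (_%:R * _).
  by rewrite /wsum; apply: eq_bigl => x; rewrite inE andbC.
rewrite (exchange_big_dep (mem D)) /=; last by move=> V x _ /andP[].
apply: eq_bigr => x xD; rewrite -mulr_sumr; congr (_ * _).
rewrite -mu_sum; apply: eq_bigl => V.
by rewrite xD /= (filt_Kx V xD).
Qed.

Lemma n_ge0 a (D : {set T}) : 0 <= Blk a (KSr D) [::].
Proof.
rewrite n_val; apply: mulr_ge0 => //; apply: sumr_ge0 => x _.
exact: mulr_ge0.
Qed.

Lemma Nf_ge0 al (A : {set T}) : 0 <= Nf al (KSr A).
Proof.
elim: al A => [|a al IH] A; first by rewrite /= /KSr.
rewrite Nf_KS; apply: sumr_ge0 => U _; apply: mulr_ge0 => //; exact: n_ge0.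
Qed.

Lemma Nf_supp al (A : {set T}) : sumn al != wsum A -> Nf al (KSr A) = 0.
Proof.
elim: al A => [|a al IH] A hne.
  rewrite /= /KSr /=; case: eqP => // eA; by move: hne; rewrite eA wsum_set0.
rewrite Nf_KS big1 // => U fU.
have [sU _] := filtP _ _ fU.
rewrite n_val; case: (eqVneq a (wsum (A :\: U))) => [ea|]; last by rewrite !mul0r.
rewrite IH ?mulr0 //; apply: contra hne => /eqP e.
by rewrite /= (wsumD sU) ea e addnC.
Qed.


Lemma KS_rcons0 a (A : {set T}) : KS (rcons a 0%N) A = KS a A.
Proof.
elim: a A => [|k a IH] A /=; last by apply: eq_bigr => U _; exact: IH.
rewrite (eq_bigl (fun U => U == A)); first by rewrite big_pred1_eq.
move=> U; apply/idP/idP.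
  move=> /andP[/filtP[sU _] /eqP /wsum0 e]; apply/eqP/setP => y.
  apply/idP/idP => [/sU //|yA]; apply/negPn/negP => yU.
  by move: (in_set0 y); rewrite -e inE yU yA.
by move/eqP ->; rewrite filt_refl setDv wsum_set0.
Qed.

Lemma KS2 x y r (A : {set T}) :
  KS [:: x, y & r] A = (\sum_(W | filt A W)
     \sum_(V | filt (A :\: W) V && (wsum (A :\: W :\: V) == x) && (wsum V == y)) KS r W)%N.
Proof.
rewrite /=.
under eq_bigr => V _ do rewrite big_mkcondr.
rewrite (pair_big A (fun V => wsum (A :\: V) == x)
   (fun V W => if wsum (V :\: W) == y then KS r W else 0%N)).
apply: eq_bigr => W fW; rewrite [RHS]big_mkcondr; apply: eq_big => V.
  by rewrite setDDl setUC.
move=> /andP[/filtP[sV _] _].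
have eV : (V :|: W) :\: W = V.
  apply/setP => z; rewrite !inE.
  case: (boolP (z \in V)) => zV /=; last by case: (z \in W); rewrite ?andbF.
  by move: (sV z zV); rewrite inE => /andP[->].
by rewrite eV.
Qed.
Definition KRp (a : seq nat) (A : {set T}) (f : {ffun T -> 'I_(size a).+1}) : bool :=
  [&& [forall x, (x \in A) == (f x < size a)%N],
      [forall x in A, forall y in A, lt x y ==> (f x <= f y)%N] &
      [forall i : 'I_(size a), (\sum_(x in A | f x == i :> nat) wt x)%N == nth 0%N a i]].

Arguments KRp : clear implicits.

Definition KR (a : seq nat) (A : {set T}) : nat := #|[set f | KRp a A f]|.

Lemma KRP a (A : {set T}) (f : {ffun T -> 'I_(size a).+1}) : reflect
  [/\ forall x, (x \in A) = (f x < size a)%N,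
      forall x y, x \in A -> y \in A -> lt x y -> (f x <= f y)%N &
      forall i : 'I_(size a), (\sum_(x in A | f x == i :> nat) wt x)%N = nth 0%N a i]
  (KRp a A f).
Proof.
apply: (iffP and3P) => [[/forallP h1 /forall_inP h2 /forallP h3]|[h1 h2 h3]]; split.
- by move=> x; apply/eqP; exact: h1.
- by move=> x y xA yA lxy; move/forall_inP: (h2 x xA) => /(_ y yA) /implyP; apply.
- by move=> i; apply/eqP; exact: h3.
- by apply/forallP => x; rewrite h1.
- apply/forall_inP => x xA; apply/forall_inP => y yA; apply/implyP; exact: h2.
- by apply/forallP => i; rewrite h3.
Qed.

Lemma KR_nil (A : {set T}) : KR [::] A = (A == set0).
Proof.
rewrite /KR; case: (set_0Vmem A) => [->|[x xA]].
  rewrite eqxx; apply/eqP; rewrite eqn_leq; apply/andP; split.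
    by rewrite (leq_trans (max_card _)) // card_ffun card_ord exp1n.
  apply/card_gt0P; exists [ffun => ord0]; rewrite inE; apply/KRP; split.
  - by move=> x; rewrite inE.
  - by move=> x y; rewrite inE.
  - by case.
have -> : (A == set0) = false by apply/negbTE/set0Pn; exists x.
apply/eqP; rewrite cards_eq0; apply/eqP/setP => f; rewrite !inE.
apply/negbTE/negP => /KRP [h1 _ _].
by move: (h1 x); rewrite xA.
Qed.

Lemma KR_cons k a (A : {set T}) :
  KR (k :: a) A = (\sum_(U | filt A U && (wsum (A :\: U) == k)) KR a U)%N.
Proof.
rewrite /KR.
set n := size a.
pose Uf (f : {ffun T -> 'I_n.+2}) := [set x | (0 < f x < n.+1)%N].
have fB (f : {ffun T -> 'I_(size (k :: a)).+1}) x : (f x < n.+2)%N := ltn_ord (f x).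
rewrite -sum1_card.
rewrite (partition_big Uf (fun U => filt A U && (wsum (A :\: U) == k))) /=; last first.
  move=> f; rewrite inE => /KRP [c1 c2 c3]; apply/andP; split.
    apply/filtP; split.
      by move=> x; rewrite inE c1 => /andP[].
    move=> x y; rewrite !inE => /andP[h0 h1] yA lxy.
    have := c2 x y; rewrite c1 h1 => /(_ isT yA lxy) hxy.
    by move: (c1 y); rewrite yA => /esym h; rewrite h andbT (leq_trans h0 hxy).
  apply/eqP; move: (c3 ord0) => /= <-; rewrite /wsum; apply: eq_bigl => x; rewrite !inE.
  case xA: (x \in A) => /=; last by rewrite andbF.
  move: (c1 x); rewrite xA => /esym ->; rewrite andbT.
  by case: (nat_of_ord (f x)).
apply: eq_bigr => U /andP[fU /eqP wU].
have [sU hU] := filtP _ _ fU.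
pose h (g : {ffun T -> 'I_n.+1}) : {ffun T -> 'I_n.+2} :=
  [ffun x => if (x \in A) && (x \notin U) then ord0 else lift ord0 (g x)].
have hv g x : nat_of_ord (h g x) = if (x \in A) && (x \notin U) then 0%N else (g x).+1.
  by rewrite /h ffunE; case: ifP.
have gn (g : {ffun T -> 'I_n.+1}) x : KRp a U g -> x \notin U -> nat_of_ord (g x) = n.
  move=> /KRP [d1 _ _] xU; move: (d1 x) (ltn_ord (g x)); rewrite (negbTE xU).
  by move=> /esym /negbT; rewrite -leqNgt => h1 h2; apply/eqP; rewrite eqn_leq h1 -ltnS h2.
transitivity #|[set f in [set f | KRp (k :: a) A f] | Uf f == U]|.
  by rewrite -sum1_card; apply: eq_bigl => f; rewrite !inE.
have -> : [set f in [set f | KRp (k :: a) A f] | Uf f == U] = h @: [set g | KRp a U g].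
  apply/setP => f; rewrite !inE; apply/andP/imsetP.
  - move=> [/KRP [c1 c2 c3] /eqP eU].
    have {}c1 x : (x \in A) = (f x < n.+1)%N := c1 x.
    have xU x : (x \in U) = (0 < f x < n.+1)%N by rewrite -eU inE.
    pose g : {ffun T -> 'I_n.+1} :=
      [ffun x => if (0 < f x)%N then inord (f x - 1) else ord_max].
    have gv x : nat_of_ord (g x) = if (0 < f x)%N then (f x - 1)%N else n.
      rewrite /g ffunE; case: ifP => // _; rewrite inordK //.
      by have := fB f x; move: (nat_of_ord (f x)) => m; clear; lia.
    exists g.
      rewrite inE; apply/KRP; split.
      + move=> x; rewrite xU gv; have := fB f x.
        by case: ifP => [|/negbT]; move: (nat_of_ord (f x)) => m; clear; lia.
      + move=> x y; rewrite !xU => hx hy lxy; rewrite !gv.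
        have hxy := c2 x y; rewrite !c1 in hxy.
        move: hx hy (hxy (proj2 (andP hx)) (proj2 (andP hy)) lxy).
        move: (nat_of_ord (f x)) (nat_of_ord (f y)) => p q.
        case: ifP => [_|/negbT]; case: ifP => [_|/negbT]; clear; lia.
      + move=> i; move: (c3 (lift ord0 i)); rewrite lift0 /= => <-; apply: eq_bigl => x.
        rewrite xU gv c1; have := ltn_ord i; have := fB f x.
        move: (nat_of_ord i) (nat_of_ord (f x)) => p q.
        case: ifP => [/=|/negbT]; rewrite -?lt0n ?negbK; clear; lia.
    apply/ffunP => x; apply: val_inj => /=; rewrite hv gv.
    case xAU: ((x \in A) && (x \notin U)).
      move: xAU => /andP[xA]; rewrite xU c1 in xA *.
      by move: (nat_of_ord (f x)) xA => m; clear; lia.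
    move: xAU; rewrite xU c1; have := fB f x.
    move: (nat_of_ord (f x)) => m.
    by case: ifP => [|/negbT]; clear; lia.
  - move=> [g]; rewrite inE => gS ->.
    have [d1 d2 d3] := KRP _ _ gS.
    split; last first.
      apply/eqP/setP => x; rewrite inE hv.
      case: (boolP (x \in U)) => xU /=; rewrite ?andbF /=.
        by move: (d1 x); rewrite xU => /esym.
      case: (x \in A) => /=; first by [].
      by rewrite (gn g x gS xU) ltnn.
    apply/KRP; split.
    + move=> x; rewrite hv; case: (boolP (x \in U)) => xU.
        by rewrite (sU x xU) /= ltnS -d1.
      rewrite andbT; case: (x \in A) => //.
      by rewrite (gn g x gS xU) ltnn.
    + move=> x y xA yA lxy; rewrite !hv xA yA /=.
      case: (boolP (x \in U)) => xU //=.
      by rewrite (hU x y xU yA lxy) /= ltnS (d2 x y xU (hU x y xU yA lxy) lxy).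
    + move=> i; case: (unliftP ord0 i) => [j ->|->].
        rewrite lift0 /= -(d3 j); apply: eq_bigl => x; rewrite hv.
        case: (boolP (x \in U)) => xU /=; rewrite ?andbF /=.
          by rewrite (sU x xU).
        rewrite andbT; case: (x \in A) => //=.
      rewrite /= -wU /wsum; apply: eq_bigl => x; rewrite hv !inE.
      by case: (x \in A); case: (x \in U).
rewrite card_in_imset // => g1 g2; rewrite !inE => g1S g2S e.
apply/ffunP => x; move/ffunP: e => /(_ x); rewrite !ffunE.
case: ifP => [/andP[_ xU] _|_ /lift_inj //].
by apply: val_inj => /=; rewrite (gn g1 x g1S xU) (gn g2 x g2S xU).
Qed.

Lemma KR_KS a (A : {set T}) : KR a A = KS a A.
Proof.
elim: a A => [|k a IH] A; first by rewrite KR_nil.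
by rewrite KR_cons /=; apply: eq_bigr => U _; exact: IH.
Qed.

Definition KFp (a : seq nat) (f : {ffun T -> 'I_(size a)}) : bool :=
  [forall x, forall y, lt x y ==> (f x <= f y)%N] &&
  [forall i : 'I_(size a), (\sum_(x | f x == i) wt x)%N == nth 0%N a i].
Arguments KFp : clear implicits.

Definition KF (a : seq nat) : nat := #|[set f | KFp a f]|.

Lemma KF_KR a : KF a = KR a setT.
Proof.
rewrite /KF /KR.
pose w (f : {ffun T -> 'I_(size a)}) : {ffun T -> 'I_(size a).+1} :=
  [ffun x => widen_ord (leqnSn _) (f x)].
have -> : [set g | KRp a setT g] = w @: [set f | KFp a f].
  apply/setP => g; rewrite inE; apply/idP/imsetP.
    move=> /KRP [c1 c2 c3].
    have hlt x : (g x < size a)%N by rewrite -c1 inE.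
    exists [ffun x => Ordinal (hlt x)].
      rewrite inE; apply/andP; split.
        apply/forallP => x; apply/forallP => y; apply/implyP => lxy.
        by rewrite !ffunE /=; apply: c2; rewrite ?inE.
      apply/forallP => i; rewrite -c3; apply/eqP; apply: eq_bigl => x.
      by rewrite ffunE inE.
    by apply/ffunP => x; apply: val_inj; rewrite !ffunE.
  move=> [f]; rewrite inE => /andP[/forallP h1 /forallP h2] ->.
  apply/KRP; split.
  - by move=> x; rewrite inE ffunE /= ltn_ord.
  - move=> x y _ _ lxy; rewrite !ffunE /=.
    by move/forallP: (h1 x) => /(_ y) /implyP; apply.
  - move=> i; rewrite -(eqP (h2 i)); apply: eq_bigl => x.
    by rewrite inE ffunE.
rewrite card_in_imset // => f1 f2 _ _ e.
apply/ffunP => x; move/ffunP: e => /(_ x); rewrite !ffunE => e.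
by apply: val_inj; move/(congr1 val): e.
Qed.

Lemma KF_KS a : KF a = KS a setT.
Proof. by rewrite KF_KR KR_KS. Qed.
End Gen.

Lemma psum_gt0 (I : finType) (P : pred I) (F : I -> rat) i0 :
  (forall i, P i -> 0 <= F i) -> P i0 -> 0 < F i0 -> 0 < \sum_(i | P i) F i.
Proof.
move=> h0 Pi0 Fi0; rewrite (bigD1 i0) //=.
have : 0 <= \sum_(i | P i && (i != i0)) F i.
  by apply: sumr_ge0 => i /andP[Pi _]; exact: h0.
move: Fi0; lra.
Qed.

Lemma sum_neq0 (I : finType) (P : pred I) (F : I -> rat) :
  \sum_(i | P i) F i != 0 -> exists2 i, P i & F i != 0.
Proof.
move=> h; case: (pickP (fun i => P i && (F i != 0))) => [i /andP[? ?]|none].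
  by exists i.
case/negP: h; apply/eqP; apply: big1 => i Pi.
by move: (none i); rewrite Pi /= => /negbFE /eqP.
Qed.

Section Anti.
Variable T : finType.
Variable wt : T -> nat.
Hypothesis hw : forall x, (0 < wt x)%N.
Definition lt0 := fun _ _ : T => false.

Lemma lt0T : transitive lt0. Proof. by []. Qed.

Lemma cnt_del (A : {set T}) x v : x \in A ->
  #|[set y in A | wt y == v]| = ((wt x == v) + #|[set y in A :\ x | wt y == v]|)%N.
Proof.
move=> xA; rewrite (cardsD1 x) inE xA /=; congr (_ + _)%N.
by apply: eq_card => y; rewrite !inE andbA.
Qed.

Lemma wsum1 x : wsum wt [set x] = wt x.
Proof. by rewrite /wsum big_set1. Qed.

Lemma Nf_anti al (A : {set T}) : all (leq 1) al ->
  (Nf al (KSr lt0 wt A) != 0) <->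
  (forall v, count_mem v al = #|[set x in A | wt x == v]|).
Proof.
elim: al A => [|a al IH] A.
  move=> _ /=; rewrite KSr_nil; split.
    case hA: (A == set0); last by rewrite eqxx.
    move/eqP: hA => -> _ v.
    by rewrite /= -(cards0 T); apply: eq_card => y; rewrite !inE.
  move=> H; case: (set_0Vmem A) => [->|[x xA]]; first by rewrite eqxx.
  by move: (H (wt x)); rewrite /= (cardsD1 x) inE xA eqxx.
move=> /andP[a0 pal]; rewrite Nf_KS; split.
  move=> /sum_neq0 [U fU]; rewrite (n_val hw lt0T) => hne.
  have [sU _] := filtP _ _ _ fU.
  move: hne; case: (eqVneq a (wsum wt (A :\: U))) => [ea|]; last by rewrite !mul0r eqxx.
  rewrite mul1r mulf_eq0 negb_or => /andP[/sum_neq0 [x xAU] hx hN].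
  move/(IH _ pal): hN => HU.
  have e1 : A :\: U = [set x].
    move: hx; rewrite mulf_eq0 negb_or => /andP[_].
    case hK: (Kx lt0 (A :\: U) x == set0) => // _; move/eqP: hK => /setP e.
    apply/setP => y; rewrite inE; apply/idP/idP => [yAU|/eqP ->//].
    by apply/negPn/negP => yx; move: (e y); rewrite in_set0 inE yAU (negbTE yx) /lt0.
  have eU : U = A :\ x.
    apply/setP => y; rewrite !inE; apply/idP/idP.
      move=> yU; rewrite (sU y yU) andbT; apply/negP => /eqP eyx.
      by move: xAU; rewrite inE -eyx yU.
    move=> /andP[yx yA]; apply/negPn/negP => yU.
    have : y \in A :\: U by rewrite inE yU yA.
    by rewrite e1 inE (negbTE yx).
  have xA : x \in A by move: xAU; rewrite inE => /andP[].
  move=> v; rewrite /= HU eU (cnt_del v xA); congr (_ + _)%N.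
  by rewrite ea e1 wsum1.
move=> H.
have : (0 < count_mem a (a :: al))%N by rewrite /= eqxx.
rewrite H card_gt0 => /set0Pn [x]; rewrite inE => /andP[xA /eqP wxa].
have HU : forall v, count_mem v al = #|[set y in A :\ x | wt y == v]|.
  move=> v; move: (H v); rewrite /= (cnt_del v xA) wxa; lia.
move/(IH _ pal): HU => hN.
have hN0 := Nf_ge0 hw lt0T al (A :\ x).
apply/lt0r_neq0/(psum_gt0 (i0 := A :\ x)).
- move=> U _; apply: mulr_ge0; [exact: (n_ge0 hw lt0T)|exact: (Nf_ge0 hw lt0T)].
- apply/filtP; split; first by move=> y; rewrite inE => /andP[].
  by [].
- have e1 : A :\: (A :\ x) = [set x].
    apply/setP => y; rewrite !inE; case: (eqVneq y x) => [->|yx] /=.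
      by rewrite xA.
    by case: (y \in A).
  rewrite e1 (n_val hw lt0T) wsum1 wxa eqxx mul1r big_set1.
  have -> : Kx lt0 [set x] x = set0.
    by apply/setP => y; rewrite !inE /lt0 orbF; case: eqP.
  rewrite eqxx mulr1; apply: mulr_gt0; first by rewrite ltr0n hw.
  by rewrite lt0r hN hN0.
Qed.

Lemma filt_lt0 (B V : {set T}) : filt lt0 B V = (V \subset B).
Proof.
apply/idP/idP => [/filtP[sV _]|/subsetP sV]; first by apply/subsetP.
by apply/filtP; split.
Qed.

Lemma KS_swap x y r (A : {set T}) :
  KS lt0 wt [:: x, y & r] A = KS lt0 wt [:: y, x & r] A.
Proof.
rewrite !KS2; apply: eq_bigr => W _.
set B := A :\: W.
rewrite (reindex_onto (fun V => B :\: V) (fun V => B :\: V)) /=; last first.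
  move=> V /andP[/andP[]]; rewrite filt_lt0 => sV _ _.
  by rewrite setDDr setDv set0U; apply/setIidPr.
apply: eq_bigl => V; rewrite !filt_lt0 subsetDl /=.
case: (boolP (V \subset B)) => sV /=.
  rewrite setDDr setDv set0U (setIidPr sV) eqxx andbT.
  by rewrite andbC.
apply/negbTE; apply: contra sV => /andP[_ /eqP <-].
by rewrite subsetDl.
Qed.

Lemma KS_front x b1 b2 (A : {set T}) :
  KS lt0 wt (x :: b1 ++ b2) A = KS lt0 wt (b1 ++ x :: b2) A.
Proof.
elim: b1 A => [|y b1 IH] A //=.
rewrite -/(KS lt0 wt [:: x, y & b1 ++ b2] A) KS_swap /=.
by apply: eq_bigr => U _; exact: IH.
Qed.

Lemma KS_perm a b (A : {set T}) : perm_eq a b -> KS lt0 wt a A = KS lt0 wt b A.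
Proof.
elim: a b A => [|x a IH] b A hp.
  by move: (perm_size hp); case: b {hp}.
have xb : x \in b by rewrite -(perm_mem hp) mem_head.
case/splitPr: xb hp => b1 b2 hp.
have hp' : perm_eq a (b1 ++ b2).
  by rewrite -(perm_cons x); apply: (perm_trans hp); rewrite (perm_catCA b1 [:: x] b2).
rewrite -KS_front /=; apply: eq_bigr => U _; exact: IH.
Qed.
End Anti.


Lemma sum1_set (T : finType) (P : pred T) : (\sum_(x | P x) 1)%N = #|[set x | P x]|.
Proof. by rewrite -sum1_card; apply: eq_bigl => x; rewrite inE. Qed.

Lemma Kcoef_KS d (P : finPOrderType d) a :
  Kcoef P a = KS (fun x y : P => (x < y)%O) (fun _ => 1%N) a setT.
Proof.
rewrite -KF_KS /Kcoef /KF; apply: eq_card => f; rewrite !inE /KFp; congr (_ && _).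
by apply: eq_forallb => i; rewrite sum1_set.
Qed.

Lemma Pcoef_KS l a : Pcoef l a = KS (@lt0 'I_(size l)) (fun j => nth 0%N l j) a setT.
Proof.
rewrite -KF_KS /Pcoef /KF; apply: eq_card => g; rewrite !inE /KFp.
have -> : [forall x : 'I_(size l), forall y, lt0 x y ==> (g x <= g y)%N] = true.
  by apply/forallP => x; apply/forallP.
by [].
Qed.

Lemma count_card (s : seq nat) v :
  count_mem v s = #|[set x : 'I_(size s) | nth 0%N s x == v]|.
Proof. by rewrite -sum1_count (big_nth 0%N) big_mkord sum1_set. Qed.

Lemma part_eq l1 l2 : is_partition l1 -> is_partition l2 -> perm_eq l1 l2 -> l1 = l2.
Proof.
move=> /andP[s1 _] /andP[s2 _]; apply: sorted_eq s1 s2.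
- by move=> x y z h1 h2; exact: leq_trans h2 h1.
- by move=> x y /andP[h1 h2]; move: h1 h2 => /= h1 h2; lia.
Qed.

Lemma size_le_sumn s : all (leq 1) s -> (size s <= sumn s)%N.
Proof. elim: s => //= x s IH /andP[x1 /IH]; lia. Qed.

Lemma elem_le_sumn s x : x \in s -> (x <= sumn s)%N.
Proof.
elim: s => //= y s IH; rewrite inE => /orP[/eqP ->|/IH]; lia.
Qed.

Fixpoint seqsN (N k : nat) : seq (seq nat) :=
  if k is k'.+1 then [seq x :: s | x <- iota 0 N.+1, s <- seqsN N k'] else [:: [::]].

Lemma mem_seqsN N s : all (fun x => x <= N)%N s -> s \in seqsN N (size s).
Proof.
elim: s => [|x s IH]; first by rewrite mem_head.
move=> h; have /andP[xN /IH hs] : (x <= N)%N && all (fun x => x <= N)%N s := h. apply/flattenP; exists [seq x :: s0 | s0 <- seqsN N (size s)].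
  by apply: (map_f (fun x0 => [seq x0 :: s0 | s0 <- seqsN N (size s)])); rewrite mem_iota /= add0n ltnS.
exact: map_f.
Qed.

Definition allS N := flatten [seq seqsN N k | k <- iota 0 N.+1].

Definition Lpart N := undup [seq s <- allS N | is_partition s && (sumn s <= N)%N].

Lemma mem_Lpart N l : (l \in Lpart N) = is_partition l && (sumn l <= N)%N.
Proof.
rewrite mem_undup mem_filter andbC.
case: (boolP (is_partition l && _)) => [/andP[/andP[_ pl] hN]|_]; last by rewrite andbF.
rewrite andbT /allS; apply/flattenP; exists (seqsN N (size l)).
  apply: map_f; rewrite mem_iota add0n ltnS.
  exact: leq_trans (size_le_sumn pl) hN.
apply: mem_seqsN; apply/allP => x /elem_le_sumn h; exact: leq_trans h hN.
Qed.

Lemma Nf_add al psi1 psi2 :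
  Nf al (fun b => psi1 b + psi2 b) = Nf al psi1 + Nf al psi2.
Proof.
rewrite (Nf_ext _ (psi' := fun b => \sum_(f <- [:: psi1; psi2]) f b)); last first.
  by move=> b; rewrite !big_cons big_nil addr0.
by rewrite Nf_sum !big_cons big_nil addr0.
Qed.

Lemma Nf_sub al psi1 psi2 :
  Nf al (fun b => psi1 b - psi2 b) = Nf al psi1 - Nf al psi2.
Proof.
transitivity (Nf al psi1 + Nf al (fun b => -1 * psi2 b)).
  by rewrite -Nf_add; apply: Nf_ext => b; rewrite mulN1r.
by rewrite Nf_scale mulN1r.
Qed.

Lemma Pr_neq0 lam mu : is_partition lam -> is_partition mu ->
  (Nf lam (fun b => (Pcoef mu b)%:R) != 0) <-> lam = mu.
Proof.
move=> plam pmu.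
have hw : forall x : 'I_(size mu), (0 < nth 0%N mu x)%N.
  move=> x; case/andP: pmu => _ /all_nthP; apply; exact: ltn_ord.
rewrite (Nf_ext _ (psi' := KSr (@lt0 'I_(size mu)) (fun j => nth 0%N mu j) setT)); last first.
  by move=> b; rewrite /KSr Pcoef_KS.
rewrite (Nf_anti hw _ (proj2 (andP plam))); split.
  move=> H; apply: part_eq => //; apply/allP => v _ /=; rewrite H count_card.
  by apply/eqP; apply: eq_card => x; rewrite !inE.
move=> -> v; rewrite count_card; apply: eq_card => x; rewrite !inE.
by [].
Qed.

Lemma Pr_ge0 al mu : is_partition mu -> 0 <= Nf al (fun b => (Pcoef mu b)%:R).
Proof.
move=> pmu.
have hw : forall x : 'I_(size mu), (0 < nth 0%N mu x)%N.
  move=> x; case/andP: pmu => _ /all_nthP; apply; exact: ltn_ord.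
rewrite (Nf_ext _ (psi' := KSr (@lt0 'I_(size mu)) (fun j => nth 0%N mu j) setT)); last first.
  by move=> b; rewrite /KSr Pcoef_KS.
exact: (Nf_ge0 hw (@lt0T _)).
Qed.

Theorem corollary4p3 (m : nat) (d : 'I_m -> Order.disp_t)
    (P : forall i : 'I_m, finPOrderType (d i)) :
  (* sum_{P in the collection} K_P is symmetric *)
  (forall a b : seq nat, perm_eq a b ->
     (\sum_(i < m) Kcoef (P i) a = \sum_(i < m) Kcoef (P i) b)%N) ->
  (* ... hence p-positive *)
  exists (L : seq (seq nat)) (c : seq nat -> rat),
    all is_partition L /\ (forall l, 0 <= c l) /\
    forall a : seq nat,
      (\sum_(i < m) Kcoef (P i) a)%:R = \sum_(l <- L) c l * (Pcoef l a)%:R.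
Proof.
move=> hsym.
set N := (\sum_(i < m) #|P i|)%N.
pose ltP i := fun x y : P i => (x < y)%O.
pose Phi (b : seq nat) : rat := (\sum_(i < m) Kcoef (P i) b)%:R.
have PhiE b : Phi b = \sum_(i < m) KSr (ltP i) (fun _ => 1%N) setT b.
  by rewrite /Phi natr_sum; apply: eq_bigr => i _; rewrite Kcoef_KS.
have NfPhi al : Nf al Phi = \sum_(i < m) Nf al (KSr (ltP i) (fun _ => 1%N) setT).
  by rewrite (Nf_ext _ PhiE) Nf_sum.
have ltPT i : transitive (ltP i) by move=> y x z; exact: lt_trans.
have hw1 i : forall x : P i, (0 < (fun _ => 1%N) x)%N by [].
have Phi_ge0 al : 0 <= Nf al Phi.
  rewrite NfPhi; apply: sumr_ge0 => i _; exact: (Nf_ge0 (hw1 i) (ltPT i)).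
have Phi_supp al : Nf al Phi != 0 -> (sumn al <= N)%N.
  rewrite NfPhi => /sum_neq0 [i _ hi].
  have e : sumn al = #|P i|.
    apply/eqP; apply: contraR hi => hne; apply/eqP.
    rewrite (Nf_supp (hw1 i) (ltPT i)) //.
    by rewrite /wsum sum1_card cardsT.
  by rewrite e /N (bigD1 i) //= leq_addr.
pose Pr mu b : rat := (Pcoef mu b)%:R.
set L := Lpart N.
pose c mu := if is_partition mu then Nf mu Phi / Nf mu (Pr mu) else 0.
pose G b := Phi b - \sum_(mu <- L) c mu * Pr mu b.
have G1 a b : perm_eq a b -> G a = G b.
  move=> hab; rewrite /G /Phi (hsym a b hab); congr (_ - _).
  apply: eq_bigr => mu _; by rewrite /Pr !Pcoef_KS (KS_perm _ _ hab).
have G2 a : G (rcons a 0%N) = G a.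
  rewrite /G /Phi; congr (_%:R - _).
    by apply: eq_bigr => i _; rewrite !Kcoef_KS (KS_rcons0 _ (hw1 i)).
  apply: eq_big_seq => mu; rewrite mem_Lpart => /andP[pmu _].
  have hw : forall x : 'I_(size mu), (0 < nth 0%N mu x)%N.
    move=> x; case/andP: pmu => _ /all_nthP; apply; exact: ltn_ord.
  by rewrite /Pr !Pcoef_KS (KS_rcons0 _ hw).
have G3 lam : is_partition lam -> Nf lam G = 0.
  move=> plam; rewrite /G Nf_sub.
  rewrite (Nf_sum _ _ (fun mu b => c mu * Pr mu b)).
  under eq_bigr => mu _ do rewrite Nf_scale.
  case: (boolP (lam \in L)) => lamL.
    rewrite (bigD1_seq lam) ?undup_uniq //= big1_seq ?addr0.
      rewrite /c plam divfK ?subrr //; apply/(Pr_neq0 plam plam) => //.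
    move=> mu /andP[nmu]; rewrite mem_Lpart => /andP[pmu _].
    suff -> : Nf lam (Pr mu) = 0 by rewrite mulr0.
    apply/eqP; apply: contraR nmu => /(Pr_neq0 plam pmu) ->; by rewrite eqxx.
  rewrite big1_seq ?subr0.
    apply/eqP; apply: contraR lamL => /Phi_supp h.
    by rewrite mem_Lpart plam h.
  move=> mu /andP[_ muL]; have := muL; rewrite mem_Lpart => /andP[pmu _].
  suff -> : Nf lam (Pr mu) = 0 by rewrite mulr0.
  by apply/eqP; apply: contraR lamL => /(Pr_neq0 plam pmu) ->.
have G4 lam : is_partition lam -> G lam = 0.
  have [k] := ubnP (sumn lam - size lam); elim: k lam => // k IH lam hk plam.
  have Z : Zv (sumn lam) (size lam).+1 G.
    move=> beta pb sb tb.
    have pbs : perm_eq beta (sort geq beta) by rewrite perm_sym perm_sort.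
    rewrite (G1 _ _ pbs); apply: IH.
      rewrite size_sort -(perm_sumn pbs) sb.
      have := size_le_sumn pb; move: hk tb; rewrite sb; lia.
    apply/andP; split; first exact: (sort_sorted (fun x y => leq_total y x)).
    by rewrite -(perm_all _ pbs).
  have hprod : 0 < \prod_(x <- lam) (x%:R : rat).
    rewrite big_seq; apply: prodr_gt0 => x xl; rewrite ltr0n.
    by move/allP: (proj2 (andP plam)) => /(_ x xl).
  move: (G3 lam plam); rewrite (Nf_tri1 (proj2 (andP plam)) Z) => /eqP.
  by rewrite mulf_eq0 (gt_eqF hprod) /= => /eqP.
have G5 a : G a = 0.
  set p := [seq x <- a | leq 1 x].
  have hz : [seq x <- a | predC (leq 1) x] = nseq (size [seq x <- a | predC (leq 1) x]) 0%N.
    apply/all_pred1P; apply/allP => x; rewrite mem_filter /= => /andP[h _].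
    by move: h; case: x.
  have Gz k s : G (s ++ nseq k 0%N) = G s.
    elim: k => [|k IHk]; first by rewrite cats0.
    rewrite -IHk -(G2 (s ++ nseq k 0%N)); apply: G1.
    rewrite perm_sym perm_rcons perm_sym /=.
    by rewrite (perm_catCA s [:: 0%N] (nseq k 0%N)).
  have pa : perm_eq a (p ++ [seq x <- a | predC (leq 1) x]) by rewrite perm_sym perm_filterC.
  rewrite (G1 _ _ pa) hz Gz.
  have pps : perm_eq p (sort geq p) by rewrite perm_sym perm_sort.
  rewrite (G1 _ _ pps); apply: G4; apply/andP; split.
    exact: (sort_sorted (fun x y => leq_total y x)).
  rewrite -(perm_all _ pps); apply/allP => x; rewrite mem_filter.
  by case/andP.
exists L, c; split.
  by apply/allP => l; rewrite mem_Lpart => /andP[].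
split.
  move=> l; rewrite /c; case: ifP => // pl.
  apply: divr_ge0; [exact: Phi_ge0 | exact: Pr_ge0].
move=> a; move: (G5 a); rewrite /G => /eqP; rewrite subr_eq0 => /eqP.
by [].
Qed.
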